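(* Let $\phi$ be an LTL formula. For every $\mathbf{AX}^{fin}$-atom $V_0$ of $\phi$ there is a finite chain of $\mathbf{AX}^{fin}$-atoms $V_0,\dots,V_k$ such that $\bigcirc\mathit{false}\in V_k$.
   Context: LTL formulas: grammar $\phi ::= p\mid\neg\phi\mid\phi\wedge\psi\mid\bigcirc\phi\mid\phi\,\mathcal{U}\,\psi$ over propositions $p\in\Phi_0$; $\vee,\Rightarrow$ standard abbreviations; $\mathit{true}$ a fixed tautology, $\mathit{false}:=\neg\mathit{true}$, $\Diamond\phi:=\mathit{true}\,\mathcal{U}\,\phi$, $\overline{\bigcirc}\phi:=\neg\bigcirc\neg\phi$. $\mathbf{AX}^{fin}$ consists of Prop (all propositional tautology instances), MP (from $\phi$, $\phi\Rightarrow\psi$ infer $\psi$), T1: $\bigcirc\phi\wedge\bigcirc(\phi\Rightarrow\psi)\Rightarrow\bigcirc\psi$, T2': $\phi\,\mathcal{U}\,\psi\Leftrightarrow\psi\vee(\phi\wedge\overline{\bigcirc}(\phi\,\mathcal{U}\,\psi))$, T3': $\bigcirc\phi\Leftrightarrow(\bigcirc\mathit{false}\vee\overline{\bigcirc}\phi)$, RT1 (from $\phi$ infer $\bigcirc\phi$), RT2 (from $\phi'\Rightarrow\neg\psi\wedge\bigcirc\phi'$ infer $\phi'\Rightarrow\neg(\phi\,\mathcal{U}\,\psi)$), and Fin: $\Diamond\bigcirc\mathit{false}$. A formula is consistent if its negation is not provable; a finite set is consistent if its conjunction is. Closure: $Cl'(\phi)$ is the smallest set $S$ with $\phi\in S$;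 $\mathit{true}\,\mathcal{U}\,\bigcirc\mathit{false}\in S$; $\neg\psi\in S\Rightarrow\psi\in S$; $\psi_1\wedge\psi_2\in S\Rightarrow\psi_1,\psi_2\in S$; $\bigcirc\psi\in S\Rightarrow\psi\in S$; $\bigcirc\neg\psi\in S\Rightarrow\bigcirc\psi\in S$; $\psi_1\,\mathcal{U}\,\psi_2\in S\Rightarrow\psi_1,\psi_2,\overline{\bigcirc}(\psi_1\,\mathcal{U}\,\psi_2)\in S$. $Cl(\phi)=Cl'(\phi)\cup\{\neg\psi:\psi\in Cl'(\phi)\}$. An $\mathbf{AX}^{fin}$-atom of $\phi$ is a maximal consistent subset of $Cl(\phi)$; $\widehat V$ is the conjunction of its formulas. $V\to W$ iff $\widehat V\wedge\overline{\bigcirc}\widehat W$ is consistent. A chain is a sequence $V_0,V_1,\dots$ of atoms with $V_i\to V_{i+1}$ for consecutive indices. *)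

(* Defs.v *)
From Stdlib Require Import List.
Import ListNotations.

Inductive form : Type :=
| Var : nat -> form
| Not : form -> form
| And : form -> form -> form
| Next : form -> form
| Until : form -> form -> form.

Definition Or (a b : form) : form := Not (And (Not a) (Not b)).
Definition Imp (a b : form) : form := Or (Not a) b.
Definition Iff (a b : form) : form := And (Imp a b) (Imp b a).

Definition ltrue : form := Imp (Var 0) (Var 0).
Definition lfalse : form := Not ltrue.
Definition Ev (a : form) : form := Until ltrue a.
Definition WNext (a : form) : form := Not (Next (Not a)).

Inductive pform : Type :=
| PVar : nat -> pform
| PNot : pform -> pform
| PAnd : pform -> pform -> pform.

Fixpoint peval (v : nat -> bool) (t : pform) : bool :=
  match t with
  | PVar n => v n
  | PNot t => negb (peval v t)
  | PAnd t u => andb (peval v t) (peval v u)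
  end.

Definition ptautology (t : pform) : Prop := forall v, peval v t = true.

Fixpoint psubst (s : nat -> form) (t : pform) : form :=
  match t with
  | PVar n => s n
  | PNot t => Not (psubst s t)
  | PAnd t u => And (psubst s t) (psubst s u)
  end.

Inductive Provable : form -> Prop :=
| ax_Prop : forall (t : pform) (s : nat -> form),
    ptautology t -> Provable (psubst s t)
| ax_MP : forall a b, Provable a -> Provable (Imp a b) -> Provable b
| ax_T1 : forall a b,
    Provable (Imp (And (Next a) (Next (Imp a b))) (Next b))
| ax_T2' : forall a b,
    Provable (Iff (Until a b) (Or b (And a (WNext (Until a b)))))
| ax_T3' : forall a,
    Provable (Iff (Next a) (Or (Next lfalse) (WNext a)))
| ax_RT1 : forall a, Provable a -> Provable (Next a)
| ax_RT2 : forall a b c,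
    Provable (Imp c (And (Not b) (Next c))) ->
    Provable (Imp c (Not (Until a b)))
| ax_Fin : Provable (Ev (Next lfalse)).

Definition consistent (a : form) : Prop := ~ Provable (Not a).

Fixpoint conj (l : list form) : form :=
  match l with
  | [] => ltrue
  | [a] => a
  | a :: l' => And a (conj l')
  end.

Definition fset := form -> Prop.

Definition enumerates (l : list form) (A : fset) : Prop :=
  forall x, In x l <-> A x.

Definition set_consistent (A : fset) : Prop :=
  exists l, enumerates l A /\ consistent (conj l).

Inductive Clp (phi : form) : form -> Prop :=
| clp_self : Clp phi phi
| clp_fin : Clp phi (Until ltrue (Next lfalse))
| clp_not : forall a, Clp phi (Not a) -> Clp phi a
| clp_andl : forall a b, Clp phi (And a b) -> Clp phi a
| clp_andr : forall a b, Clp phi (And a b) -> Clp phi b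
| clp_next : forall a, Clp phi (Next a) -> Clp phi a
| clp_nextnot : forall a, Clp phi (Next (Not a)) -> Clp phi (Next a)
| clp_untill : forall a b, Clp phi (Until a b) -> Clp phi a
| clp_untilr : forall a b, Clp phi (Until a b) -> Clp phi b
| clp_untilw : forall a b, Clp phi (Until a b) -> Clp phi (WNext (Until a b)).

Definition Cl (phi : form) (a : form) : Prop :=
  Clp phi a \/ exists b, a = Not b /\ Clp phi b.

Definition atom (phi : form) (V : fset) : Prop :=
  (forall a, V a -> Cl phi a) /\
  set_consistent V /\
  (forall W : fset, (forall a, W a -> Cl phi a) -> (forall a, V a -> W a) ->
     set_consistent W -> forall a, W a -> V a).

Definition trans (V W : fset) : Prop :=
  exists lv lw, enumerates lv V /\ enumerates lw W /\
    consistent (And (conj lv) (WNext (conj lw))).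

(* Main.v *)
Require Import Defs.
From Stdlib Require Import List Classical ClassicalEpsilon FunctionalExtensionality PropExtensionality Lia Arith.
Import ListNotations.

Definition POr (a b : pform) := PNot (PAnd (PNot a) (PNot b)).
Definition PImp (a b : pform) := POr (PNot a) b.
Definition sb (l : list form) (n : nat) : form := nth n l ltrue.
Definition p0 := PVar 0.
Definition p1 := PVar 1.
Definition p2 := PVar 2.
Definition p3 := PVar 3.

Lemma taut (t : pform) (l : list form) : ptautology t -> Provable (psubst (sb l) t).
Proof. intro H. apply ax_Prop. exact H. Qed.

Ltac ptaut T L := refine (taut T L _); let v := fresh "v" in intro v;
  unfold POr, PImp, p0, p1, p2, p3; simpl;
  repeat (match goal with |- context [v ?n] => destruct (v n) end); reflexivity.

Lemma mp a b : Provable a -> Provable (Imp a b) -> Provable b.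
Proof. exact (ax_MP a b). Qed.
Lemma mp2 a b c : Provable a -> Provable b -> Provable (Imp a (Imp b c)) -> Provable c.
Proof. intros Ha Hb H. exact (mp _ _ Hb (mp _ _ Ha H)). Qed.

Lemma imp_id a : Provable (Imp a a).
Proof. ptaut (PImp p0 p0) [a]. Qed.
Lemma syl a b c : Provable (Imp a b) -> Provable (Imp b c) -> Provable (Imp a c).
Proof. intros H1 H2. apply (mp2 _ _ _ H1 H2).
  ptaut (PImp (PImp p0 p1) (PImp (PImp p1 p2) (PImp p0 p2))) [a;b;c]. Qed.
Lemma and_imp x a b : Provable (Imp x a) -> Provable (Imp x b) -> Provable (Imp x (And a b)).
Proof. intros H1 H2. apply (mp2 _ _ _ H1 H2).
  ptaut (PImp (PImp p0 p1) (PImp (PImp p0 p2) (PImp p0 (PAnd p1 p2)))) [x;a;b]. Qed.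
Lemma and_e1 a b : Provable (Imp (And a b) a).
Proof. ptaut (PImp (PAnd p0 p1) p0) [a;b]. Qed.
Lemma and_e2 a b : Provable (Imp (And a b) b).
Proof. ptaut (PImp (PAnd p0 p1) p1) [a;b]. Qed.
Lemma or_elim a b c : Provable (Imp a c) -> Provable (Imp b c) -> Provable (Imp (Or a b) c).
Proof. intros H1 H2. apply (mp2 _ _ _ H1 H2).
  ptaut (PImp (PImp p0 p2) (PImp (PImp p1 p2) (PImp (POr p0 p1) p2))) [a;b;c]. Qed.
Lemma or_i1 a b : Provable (Imp a (Or a b)).
Proof. ptaut (PImp p0 (POr p0 p1)) [a;b]. Qed.
Lemma or_i2 a b : Provable (Imp b (Or a b)).
Proof. ptaut (PImp p1 (POr p0 p1)) [a;b]. Qed.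
Lemma weak x a : Provable a -> Provable (Imp x a).
Proof. intro H. apply (mp _ _ H). ptaut (PImp p0 (PImp p1 p0)) [a;x]. Qed.
Lemma true_prov : Provable ltrue.
Proof. ptaut (PImp p0 p0) [Var 0]. Qed.
Lemma false_imp a : Provable (Imp lfalse a).
Proof. ptaut (PImp (PNot (PImp p0 p0)) p1) [Var 0; a]. Qed.
Lemma contra a b : Provable (Imp a b) -> Provable (Imp (Not b) (Not a)).
Proof. intro H. apply (mp _ _ H). ptaut (PImp (PImp p0 p1) (PImp (PNot p1) (PNot p0))) [a;b]. Qed.
Lemma neg_mp a b : Provable (Imp a b) -> Provable (Not b) -> Provable (Not a).
Proof. intros H1 H2. exact (mp _ _ H2 (contra _ _ H1)). Qed.
Lemma nand_imp a b : Provable (Not (And a (Not b))) -> Provable (Imp a b).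
Proof. intro H. apply (mp _ _ H). ptaut (PImp (PNot (PAnd p0 (PNot p1))) (PImp p0 p1)) [a;b]. Qed.
Lemma neg2 x a : Provable (Imp x a) -> Provable (Imp x (Not a)) -> Provable (Not x).
Proof. intros H1 H2. apply (mp2 _ _ _ H1 H2).
  ptaut (PImp (PImp p0 p1) (PImp (PImp p0 (PNot p1)) (PNot p0))) [x;a]. Qed.
Lemma split_neg p c : Provable (Not (And p c)) -> Provable (Not (And (Not p) c)) -> Provable (Not c).
Proof. intros H1 H2. apply (mp2 _ _ _ H1 H2).
  ptaut (PImp (PNot (PAnd p0 p1)) (PImp (PNot (PAnd (PNot p0) p1)) (PNot p1))) [p;c]. Qed.
Lemma split_or p c : Provable (Imp c (Or (And p c) (And (Not p) c))).
Proof. ptaut (PImp p1 (POr (PAnd p0 p1) (PAnd (PNot p0) p1))) [p;c]. Qed.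
Lemma iff_l a b : Provable (Iff a b) -> Provable (Imp a b).
Proof. intro H. apply (mp _ _ H). ptaut (PImp (PAnd (PImp p0 p1) (PImp p1 p0)) (PImp p0 p1)) [a;b]. Qed.
Lemma iff_r a b : Provable (Iff a b) -> Provable (Imp b a).
Proof. intro H. apply (mp _ _ H). ptaut (PImp (PAnd (PImp p0 p1) (PImp p1 p0)) (PImp p1 p0)) [a;b]. Qed.
Lemma imp_k a b c : Provable (Imp a c) -> Provable (Imp a (Imp b c)).
Proof. intro H. apply (mp _ _ H). ptaut (PImp (PImp p0 p2) (PImp p0 (PImp p1 p2))) [a;b;c]. Qed.
Lemma imp_neg a b c : Provable (Imp b (Not a)) -> Provable (Imp a (Imp b c)).
Proof. intro H. apply (mp _ _ H). ptaut (PImp (PImp p1 (PNot p0)) (PImp p0 (PImp p1 p2))) [a;b;c]. Qed.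
Lemma uncurry a b c : Provable (Imp a (Imp b c)) -> Provable (Imp (And a b) c).
Proof. intro H. apply (mp _ _ H). ptaut (PImp (PImp p0 (PImp p1 p2)) (PImp (PAnd p0 p1) p2)) [a;b;c]. Qed.
Lemma rt2_use a b : Provable (Imp a (Not b)) -> Provable b -> Provable (Not a).
Proof. intros H1 H2. apply (mp2 _ _ _ H1 H2). ptaut (PImp (PImp p0 (PNot p1)) (PImp p1 (PNot p0))) [a;b]. Qed.

Lemma next_mono a b : Provable (Imp a b) -> Provable (Imp (Next a) (Next b)).
Proof. intro H. apply (mp2 _ _ _ (ax_RT1 _ H) (ax_T1 a b)).
  ptaut (PImp p1 (PImp (PImp (PAnd p0 p1) p2) (PImp p0 p2))) [Next a; Next (Imp a b); Next b]. Qed.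

Lemma next_and a b : Provable (Imp (And (Next a) (Next b)) (Next (And a b))).
Proof.
  assert (H1 : Provable (Imp (Next b) (Next (Imp a (And a b))))).
  { apply next_mono. ptaut (PImp p1 (PImp p0 (PAnd p0 p1))) [a;b]. }
  apply (mp2 _ _ _ H1 (ax_T1 a (And a b))).
  ptaut (PImp (PImp p1 p3) (PImp (PImp (PAnd p0 p3) p2) (PImp (PAnd p0 p1) p2)))
    [Next a; Next b; Next (And a b); Next (Imp a (And a b))].
Qed.

Lemma wnext_mono a b : Provable (Imp a b) -> Provable (Imp (WNext a) (WNext b)).
Proof. intro H. unfold WNext. apply contra. apply next_mono. apply contra. exact H. Qed.

Lemma wnext_and a b : Provable (Imp (And (WNext a) (Next b)) (WNext (And a b))).
Proof.
  assert (H1 : Provable (Imp (Next (Not (And a b))) (Next (Imp b (Not a))))).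
  { apply next_mono. ptaut (PImp (PNot (PAnd p0 p1)) (PImp p1 (PNot p0))) [a;b]. }
  apply (mp2 _ _ _ H1 (ax_T1 b (Not a))).
  ptaut (PImp (PImp p0 p1) (PImp (PImp (PAnd p2 p1) p3) (PImp (PAnd (PNot p3) p2) (PNot p0))))
    [Next (Not (And a b)); Next (Imp b (Not a)); Next b; Next (Not a)].
Qed.

Lemma t3_fwd a : Provable (Imp (And (Not (Next lfalse)) (Next a)) (WNext a)).
Proof. apply (mp _ _ (iff_l _ _ (ax_T3' a))).
  ptaut (PImp (PImp p0 (POr p1 p2)) (PImp (PAnd (PNot p1) p0) p2)) [Next a; Next lfalse; WNext a]. Qed.
Lemma t3_bwd a : Provable (Imp (WNext a) (Next a)).
Proof. eapply syl; [apply or_i2| apply (iff_r _ _ (ax_T3' a))]. Qed.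

Fixpoint cj (l : list form) : form := match l with [] => ltrue | a :: l' => And a (cj l') end.
Fixpoint disj (l : list form) : form := match l with [] => lfalse | a :: l' => Or a (disj l') end.

Lemma cj_in l x : In x l -> Provable (Imp (cj l) x).
Proof. induction l as [|a l IH]; simpl; intros H; [contradiction|].
  destruct H as [<-|H]. apply and_e1. eapply syl; [apply and_e2| apply IH, H]. Qed.

Lemma cj_intro c l : (forall x, In x l -> Provable (Imp c x)) -> Provable (Imp c (cj l)).
Proof. induction l as [|a l IH]; simpl; intros H. apply weak, true_prov.
  apply and_imp; auto. Qed.

Lemma conj_in l x : In x l -> Provable (Imp (conj l) x).
Proof. induction l as [|a l IH]; intros H; [destruct H|]. destruct l as [|b l'].
  - destruct H as [<-|[]]. apply imp_id.
  - change (conj (a :: b :: l')) with (And a (conj (b :: l'))). destruct H as [<-|H].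
    apply and_e1. eapply syl; [apply and_e2|apply IH, H]. Qed.

Lemma conj_intro c l : (forall x, In x l -> Provable (Imp c x)) -> Provable (Imp c (conj l)).
Proof. induction l as [|a l IH]; intros H. simpl; apply weak, true_prov.
  destruct l as [|b l']. simpl. apply H; left; auto.
  change (conj (a :: b :: l')) with (And a (conj (b :: l'))). apply and_imp.
  apply H; left; auto. apply IH. intros; apply H; right; auto. Qed.

Lemma disj_in l x : In x l -> Provable (Imp x (disj l)).
Proof. induction l as [|a l IH]; simpl; intros H; [contradiction|].
  destruct H as [<-|H]. apply or_i1. eapply syl; [apply IH, H| apply or_i2]. Qed.

Lemma disj_elim l c : (forall x, In x l -> Provable (Imp x c)) -> Provable (Imp (disj l) c).
Proof. induction l as [|a l IH]; simpl; intros H. apply false_imp.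
  apply or_elim; auto. Qed.

Lemma cj_conj l : Provable (Imp (cj l) (conj l)).
Proof. apply conj_intro. intros; apply cj_in; auto. Qed.

Definition setl (l : list form) : fset := fun x => In x l.
Lemma fset_ext (A B : fset) : (forall x, A x <-> B x) -> A = B.
Proof. intro H. apply functional_extensionality. intro x. apply propositional_extensionality. auto. Qed.

Lemma sc_noboth A psi : set_consistent A -> A psi -> A (Not psi) -> False.
Proof. intros [l [He Hc]] H1 H2. apply Hc. apply neg2 with psi.
  apply conj_in, He, H1. apply conj_in, He, H2. Qed.

Lemma next_cj c ls : (forall x, In x ls -> Provable (Imp c (Next x))) -> Provable (Imp c (Next (cj ls))).
Proof. induction ls as [|a ls IH]; simpl; intros H.
  apply weak, ax_RT1, true_prov.
  eapply syl; [apply and_imp; [apply H; left; auto| apply IH; intros; apply H; right; auto]| apply next_and]. Qed.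

Lemma filt_lemma {A} (f : A -> form) (q : A -> bool) (M : list A) :
  Provable (Imp (And (disj (map f M)) (cj (map (fun a => Not (f a)) (filter (fun a => negb (q a)) M))))
     (disj (map f (filter q M)))).
Proof.
  apply uncurry. apply disj_elim. intros x Hx. apply in_map_iff in Hx. destruct Hx as [a [<- Ha]].
  destruct (q a) eqn:Eq.
  - apply imp_k. apply disj_in. apply in_map. apply filter_In. auto.
  - apply imp_neg. apply cj_in. apply (in_map (fun a => Not (f a))). apply filter_In. rewrite Eq. auto.
Qed.

Fixpoint subs (f : form) : list form :=
  f :: match f with
       | Var _ => []
       | Not a => subs a
       | And a b => subs a ++ subs b
       | Next a => subs a
       | Until a b => subs a ++ subs b
       end.

Lemma subs_self f : In f (subs f).
Proof. destruct f; simpl; auto. Qed.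
#[local] Hint Resolve subs_self in_or_app : core.

Lemma subs_trans f g h : In g (subs f) -> In h (subs g) -> In h (subs f).
Proof.
  induction f; intros Hg Hh; destruct Hg as [Hg|Hg]; try (subst; exact Hh); simpl in Hg; right.
  - contradiction.
  - eauto.
  - apply in_app_iff in Hg; apply in_or_app; destruct Hg; eauto.
  - eauto.
  - apply in_app_iff in Hg; apply in_or_app; destruct Hg; eauto.
Qed.

Definition finf := Until ltrue (Next lfalse).
Definition SUB phi := subs phi ++ subs finf.
Lemma SUB_closed phi g h : In g (SUB phi) -> In h (subs g) -> In h (SUB phi).
Proof. unfold SUB; intros Hg Hh; apply in_app_iff in Hg; apply in_or_app;
  destruct Hg; [left|right]; eapply subs_trans; eauto. Qed.

Definition five g := [g; Next g; Not g; Next (Not g); Not (Next (Not g))].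
Definition Sup phi := flat_map five (SUB phi).
Definition inS phi x := exists g, In g (SUB phi) /\
  (x = g \/ x = Next g \/ x = Not g \/ x = Next (Not g) \/ x = Not (Next (Not g))).

Lemma inS_Sup phi x : inS phi x -> In x (Sup phi).
Proof. intros [g [Hg Hx]]. unfold Sup. apply in_flat_map. exists g. split; auto.
  destruct Hx as [->|[->|[->|[->| ->]]]]; simpl; auto 7. Qed.

Lemma inS1 phi g : In g (SUB phi) -> inS phi g.
Proof. intro H; exists g; split; auto. Qed.
Lemma inS2 phi g : In g (SUB phi) -> inS phi (Next g).
Proof. intro H; exists g; split; auto. Qed.
Lemma inS3 phi g : In g (SUB phi) -> inS phi (Not g).
Proof. intro H; exists g; split; auto 6. Qed.
Lemma inS4 phi g : In g (SUB phi) -> inS phi (Next (Not g)).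
Proof. intro H; exists g; split; auto 7. Qed.
Lemma inS5 phi g : In g (SUB phi) -> inS phi (Not (Next (Not g))).
Proof. intro H; exists g; split; auto 8. Qed.

Ltac hs Hg := first
  [ apply inS1; exact Hg | apply inS2; exact Hg | apply inS3; exact Hg | apply inS4; exact Hg
  | apply inS5; exact Hg
  | apply inS1; eapply SUB_closed; [exact Hg | simpl; solve [auto 10]]
  | apply inS2; eapply SUB_closed; [exact Hg | simpl; solve [auto 10]] ].

Lemma Clp_inS phi x : Clp phi x -> inS phi x.
Proof.
  intro H; induction H.
  1: (apply inS1; unfold SUB; apply in_or_app; left; apply subs_self).
  1: (apply inS1; unfold SUB; apply in_or_app; right; apply subs_self).
  all: destruct IHClp as [g [Hg E]]; destruct E as [E|[E|[E|[E|E]]]]; try discriminate;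
      try (injection E as E); subst; unfold WNext; hs Hg.
Qed.

Definition dec (P : Prop) : bool := if excluded_middle_informative P then true else false.
Lemma dec_true P : dec P = true <-> P.
Proof. unfold dec; destruct (excluded_middle_informative P) as [h|h]; split; intro; auto.
  all: try discriminate; try contradiction. Qed.

Definition Lcl phi := filter (fun x => dec (Clp phi x)) (Sup phi).
Lemma Lcl_spec phi x : In x (Lcl phi) <-> Clp phi x.
Proof. unfold Lcl. rewrite filter_In, dec_true. split; [tauto|].
  intro H; split; auto. apply inS_Sup, Clp_inS, H. Qed.

Fixpoint choices (L : list form) : list (list form) :=
  match L with
  | [] => [[]]
  | p :: L' => map (cons p) (choices L') ++ map (cons (Not p)) (choices L')
  end.

Lemma ch_in L m : In m (choices L) -> forall p, In p L -> In p m \/ In (Not p) m.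
Proof.
  revert m; induction L as [|q L IH]; simpl; intros m Hm p Hp; [contradiction|].
  apply in_app_iff in Hm. destruct Hm as [Hm|Hm]; apply in_map_iff in Hm; destruct Hm as [m' [<- Hm']];
  destruct Hp as [<-|Hp]; simpl; auto; destruct (IH m' Hm' p Hp); auto.
Qed.

Lemma ch_sub L m : In m (choices L) -> forall x, In x m -> In x L \/ exists p, x = Not p /\ In p L.
Proof.
  revert m; induction L as [|q L IH]; simpl; intros m Hm x Hx.
  - destruct Hm as [<-|[]]. destruct Hx.
  - apply in_app_iff in Hm. destruct Hm as [Hm|Hm]; apply in_map_iff in Hm; destruct Hm as [m' [<- Hm']];
    destruct Hx as [<-|Hx].
    + left; left; reflexivity.
    + destruct (IH m' Hm' x Hx) as [H|[p [-> H]]]; [left; right; exact H| right; exists p; auto].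
    + right; exists q; auto.
    + destruct (IH m' Hm' x Hx) as [H|[p [-> H]]]; [left; right; exact H| right; exists p; auto].
Qed.

Lemma choices_disj L : Provable (disj (map cj (choices L))).
Proof.
  induction L as [|p L IH]; simpl.
  - apply (mp _ _ true_prov). apply or_i1.
  - eapply mp; [exact IH|]. apply disj_elim. intros x Hx. apply in_map_iff in Hx.
    destruct Hx as [m [<- Hm]].
    eapply syl; [apply (split_or p)|]. rewrite map_app.
    apply or_elim; apply disj_in; apply in_or_app; [left|right]; apply in_map_iff.
    + exists (p :: m); split; [reflexivity| apply in_map; exact Hm].
    + exists (Not p :: m); split; [reflexivity| apply in_map; exact Hm].
Qed.

Lemma choose_m (W : fset) L :
  (forall p, In p L -> W p \/ W (Not p)) -> (forall p, In p L -> ~ (W p /\ W (Not p))) ->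
  exists m, In m (choices L) /\ (forall x, In x m -> W x) /\
    (forall p, In p L -> (W p -> In p m) /\ (W (Not p) -> In (Not p) m)).
Proof.
  induction L as [|q L IH]; intros H1 H2.
  - exists []. simpl. split; [auto|]. split; intros; contradiction.
  - destruct IH as [m [Hm [Hs Hc]]]; [intros; apply H1; right; auto| intros; apply H2; right; auto|].
    destruct (H1 q (or_introl eq_refl)) as [Hq|Hq].
    + exists (q :: m). split; [simpl; apply in_or_app; left; apply in_map; exact Hm|]. split.
      * intros x [<-|Hx]; auto.
      * intros p [<-|Hp].
        -- split; [intros; left; reflexivity| intro; exfalso; apply (H2 q); simpl; auto].
        -- destruct (Hc p Hp) as [Ha Hb]. split; intro; right; auto.
    + exists (Not q :: m). split; [simpl; apply in_or_app; right; apply in_map; exact Hm|]. split.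
      * intros x [<-|Hx]; auto.
      * intros p [<-|Hp].
        -- split; [intro; exfalso; apply (H2 q); simpl; auto| intros; left; reflexivity].
        -- destruct (Hc p Hp) as [Ha Hb]. split; intro; right; auto.
Qed.

Lemma atom_compl phi W psi : atom phi W -> Clp phi psi -> W psi \/ W (Not psi).
Proof.
  intros [HC [HS HM]] Hp. destruct HS as [lw [Hen Hcons]].
  apply NNPP; intro Hn. apply not_or_and in Hn. destruct Hn as [Hn1 Hn2].
  apply Hcons.
  assert (E : forall q, Cl phi q -> ~ W q -> Provable (Not (And q (conj lw)))).
  { intros q Hq Hnq. apply NNPP; intro Hc.
    apply Hnq. apply (HM (fun x => x = q \/ W x)).
    - intros a [->|Ha]; auto.
    - intros a Ha; right; auto.
    - exists (q :: lw). split.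
      + intro x. simpl. split; intros [E|E];
          [left; symmetry; exact E| right; apply Hen; exact E| left; symmetry; exact E| right; apply Hen; exact E].
      + intro Hp'. apply Hc. eapply neg_mp; [|exact Hp']. apply conj_intro.
        intros x [<-|Hx]. apply and_e1. eapply syl; [apply and_e2| apply conj_in; exact Hx].
    - left; reflexivity. }
  apply split_neg with psi.
  apply E; [left; exact Hp | exact Hn1].
  apply E; [right; exists psi; split; auto | exact Hn2].
Qed.

Lemma atom_rep phi W : atom phi W -> exists m, In m (choices (Lcl phi)) /\ W = setl m.
Proof.
  intro HA. destruct (choose_m W (Lcl phi)) as [m [Hm [Hs Hc]]].
  - intros p Hp. apply atom_compl with phi; auto. apply Lcl_spec; auto.
  - intros p Hp [Ha Hb]. destruct HA as [_ [HS _]]. exact (sc_noboth W p HS Ha Hb).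
  - exists m. split; auto. apply fset_ext. intro x. unfold setl. split; [|apply Hs].
    intro Wx. destruct HA as [HC _]. destruct (HC x Wx) as [H|[b [-> Hb]]].
    + apply (Hc x); [apply Lcl_spec; auto| auto].
    + apply (Hc b); [apply Lcl_spec; auto| auto].
Qed.

Lemma choice_atom phi m : In m (choices (Lcl phi)) -> ~ Provable (Not (cj m)) -> atom phi (setl m).
Proof.
  intros Hm Hc. split; [|split].
  - intros x Hx. destruct (ch_sub _ _ Hm x Hx) as [H|[p [-> H]]];
      [left; apply Lcl_spec; exact H| right; exists p; split; [reflexivity| apply Lcl_spec; exact H]].
  - exists m. split; [intro x; unfold setl; tauto|]. intro Hp. apply Hc.
    eapply neg_mp; [apply cj_conj| exact Hp].
  - intros W HWC HWm HWs x Hx. destruct (HWC x Hx) as [H|[p [-> H]]].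
    + apply Lcl_spec in H. destruct (ch_in _ _ Hm x H) as [H1|H1]; [exact H1|].
      exfalso. apply (sc_noboth W x HWs Hx (HWm _ H1)).
    + apply Lcl_spec in H. destruct (ch_in _ _ Hm p H) as [H1|H1]; [|exact H1].
      exfalso. apply (sc_noboth W p HWs (HWm _ H1) Hx).
Qed.

Definition chain_to (phi : form) (V0 W : fset) : Prop :=
  exists k (V : nat -> fset), V 0 = V0 /\ (forall i, i <= k -> atom phi (V i)) /\
    (forall i, i < k -> trans (V i) (V (S i))) /\ V k = W.

Lemma chain_atom phi V0 W : chain_to phi V0 W -> atom phi W.
Proof. intros [k [V [_ [Ha [_ <-]]]]]. apply Ha; auto. Qed.

Lemma chain_ext phi V0 W U : chain_to phi V0 W -> atom phi U -> trans W U -> chain_to phi V0 U.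
Proof.
  intros [k [V [H0 [Ha [Ht Hk]]]]] HU HWU.
  exists (S k), (fun i => if le_lt_dec i k then V i else U).
  split; [destruct (le_lt_dec 0 k); [exact H0|lia]|]. split; [|split].
  - intros i Hi. destruct (le_lt_dec i k). apply Ha; auto. exact HU.
  - intros i Hi. destruct (le_lt_dec i k); destruct (le_lt_dec (S i) k).
    + apply Ht; lia.
    + assert (i = k) by lia. subst i. rewrite Hk. exact HWU.
    + lia.
    + lia.
  - destruct (le_lt_dec (S k) k); [lia|reflexivity].
Qed.

Theorem lemma1 : forall (phi : form) (V0 : fset),
  atom phi V0 ->
  exists (k : nat) (V : nat -> fset),
    V 0 = V0 /\
    (forall i, i <= k -> atom phi (V i)) /\
    (forall i, i < k -> trans (V i) (V (S i))) /\
    V k (Next lfalse).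
Proof.
  intros phi V0 HV0. apply NNPP; intro H.
  set (L := Lcl phi).
  set (reach := chain_to phi V0).
  set (p := fun m => dec (reach (setl m))).
  set (R := filter p (choices L)).
  set (NR := filter (fun m => negb (p m)) (choices L)).
  set (Psi := disj (map cj R)).
  assert (Hnf : forall W, reach W -> ~ W (Next lfalse)).
  { intros W [k [V [H0 [Ha [Ht Hk]]]]] HW. apply H. exists k, V. subst W.
    split; [exact H0| split; [exact Ha| split; [exact Ht| exact HW]]]. }
  assert (HfinCl : Clp phi (Next lfalse)) by (apply clp_untilr with ltrue; apply clp_fin).
  assert (HDall := choices_disj L).
  assert (Hstep : forall l, In l R -> Provable (Imp (cj l) (And (Not (Next lfalse)) (Next Psi)))).
  { intros l Hl. unfold R in Hl. apply filter_In in Hl. destruct Hl as [HlC Hpl].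
    unfold p in Hpl. apply (proj1 (dec_true _)) in Hpl.
    assert (Hnf1 : Provable (Imp (cj l) (Not (Next lfalse)))).
    { apply cj_in. destruct (ch_in _ _ HlC (Next lfalse) (proj2 (Lcl_spec _ _) HfinCl)) as [h|h]; [|exact h].
      exfalso. exact (Hnf _ Hpl h). }
    apply and_imp; [exact Hnf1|].
    assert (H1 : Provable (Imp (cj l) (WNext (disj (map cj (choices L)))))).
    { eapply syl; [apply and_imp; [exact Hnf1| apply weak; apply ax_RT1; exact HDall]| apply t3_fwd]. }
    assert (H2 : forall m, In m NR -> Provable (Imp (cj l) (Next (Not (cj m))))).
    { intros m Hm. unfold NR in Hm. apply filter_In in Hm. destruct Hm as [HmC Hpm].
      destruct (classic (Provable (Not (cj m)))) as [Hi|Hc].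
      - apply weak. apply ax_RT1. exact Hi.
      - assert (HatM := choice_atom phi m HmC Hc).
        destruct (classic (trans (setl l) (setl m))) as [Ht|Hnt].
        + exfalso. unfold p in Hpm.
          assert (Hr : reach (setl m)) by (apply chain_ext with (setl l); auto).
          apply (proj2 (dec_true _)) in Hr. rewrite Hr in Hpm. discriminate.
        + apply nand_imp.
          assert (Hq : Provable (Not (And (conj l) (WNext (conj m))))).
          { apply NNPP; intro Hq. apply Hnt. exists l, m.
            split; [intro x; unfold setl; tauto|]. split; [intro x; unfold setl; tauto|]. exact Hq. }
          eapply neg_mp; [|exact Hq]. apply and_imp.
          * eapply syl; [apply and_e1| apply cj_conj].
          * eapply syl; [apply and_e2| apply wnext_mono; apply cj_conj]. }
    assert (H3 : Provable (Imp (cj l) (Next (cj (map (fun m => Not (cj m)) NR))))).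
    { apply next_cj. intros x Hx. apply in_map_iff in Hx. destruct Hx as [m [<- Hm]]. auto. }
    eapply syl; [|apply t3_bwd].
    eapply syl; [apply and_imp; [exact H1| exact H3]|].
    eapply syl; [apply wnext_and|]. apply wnext_mono. apply filt_lemma. }
  assert (Hall : Provable (Imp Psi (And (Not (Next lfalse)) (Next Psi)))).
  { apply disj_elim. intros x Hx. apply in_map_iff in Hx. destruct Hx as [l [<- Hl]]. apply Hstep; exact Hl. }
  assert (HnP : Provable (Not Psi)).
  { exact (rt2_use _ _ (ax_RT2 ltrue (Next lfalse) Psi Hall) ax_Fin). }
  destruct (atom_rep _ _ HV0) as [m0 [Hm0 E0]].
  assert (Hr0 : In m0 R).
  { unfold R. apply filter_In. split; auto. unfold p. apply dec_true. rewrite <- E0.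
    exists 0, (fun _ => V0). split; [reflexivity|]. split; [intros; exact HV0|].
    split; [intros; lia| reflexivity]. }
  assert (Hn0 : Provable (Not (cj m0))).
  { eapply neg_mp; [|exact HnP]. apply disj_in. apply in_map. exact Hr0. }
  destruct HV0 as [_ [[l [Hen Hc]] _]]. apply Hc.
  eapply neg_mp; [|exact Hn0]. apply cj_intro. intros x Hx. apply conj_in. apply Hen.
  rewrite E0. exact Hx.
Qed.
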